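(* Let $H$ be a real Hilbert space with inner product $(\cdot,\cdot)_H$, let $F:H\to\mathbb{R}$ be continuously Fréchet differentiable with gradient $\nabla F$, and for each $\Phi\in H$ let $\mathbf{L}(\Phi)=\mathbf{M}(\Phi)+\mathbf{S}(\Phi)$ with $\mathbf{M}(\Phi)$ a symmetric and $\mathbf{S}(\Phi)$ a skew-symmetric linear operator on $H$. Let $I_{n+\frac12}=[t_n,t_{n+1}]$, let $s\ge 1$, and let $\Phi^n\in H$ be given. Suppose $\Phi_h\in\mathbb{P}_s(I_{n+\frac12})\otimes H$ with $\Phi_h(t_n)=\Phi^n$ and $\mu_h\in\mathbb{P}_{s-1}(I_{n+\frac12})\otimes H$ satisfy, for all $U_h,\nu_h\in\mathbb{P}_{s-1}(I_{n+\frac12})\otimes H$, $$\int_{I_{n+\frac12}}(\dot\Phi_h,U_h)_H\,dt=\int_{I_{n+\frac12}}(\mathbf{L}(\Phi_h)\mu_h,U_h)_H\,dt,\qquad \int_{I_{n+\frac12}}(\mu_h,\nu_h)_H\,dt=\int_{I_{n+\frac12}}(\nabla F(\Phi_h),\nu_h)_H\,dt,$$ (all integrands assumed integrable). Setting $\Phi^{n+1}=\Phi_h(t_{n+1})$, one has $$F(\Phi^{n+1})-F(\Phi^n)=\int_{I_{n+\frac12}}\big(\mathbf{M}(\Phi_h)\mu_h,\mu_h\big)_H\,dt.$$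
   Context: $\mathbb{P}_s(I)$ denotes the space of real polynomials on the interval $I$ of degree at most $s$, and $\mathbb{P}_s(I)\otimes H$ the $H$-valued polynomials in $t$ of degree at most $s$. Symmetric/skew-symmetric: $(\mathbf{A}\Phi,\Psi)_H=\pm(\Phi,\mathbf{A}\Psi)_H$ for all $\Phi,\Psi$. *)

(* Defs.v *)
From HB Require Import structures.
From mathcomp Require Import all_boot all_order all_algebra.
From mathcomp Require Import all_classical all_reals all_analysis.
Set Implicit Arguments. Unset Strict Implicit. Unset Printing Implicit Defensive.
Import Order.TTheory GRing.Theory Num.Theory.
Import numFieldNormedType.Exports.
Local Open Scope ring_scope.

Definition is_inner_product (R : realType) (H : normedModType R)
  (ip : H -> H -> R) : Prop :=
  [/\ forall x y, ip x y = ip y x,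
      forall a x y z, ip (a *: x + y) z = a * ip x z + ip y z
    & forall x, ip x x = `|x| ^+ 2].

Definition is_linear_op (R : realType) (H : normedModType R) (A : H -> H) : Prop :=
  forall a x y, A (a *: x + y) = a *: A x + A y.

Definition Hpoly (R : realType) (H : normedModType R) (s : nat) (f : R -> H) : Prop :=
  exists a : nat -> H, forall t : R, f t = \sum_(k < s.+1) (t ^+ k) *: a k.

(* Main.v *)
Require Import Defs.
From HB Require Import structures.
From mathcomp Require Import all_boot all_order all_algebra.
From mathcomp Require Import all_classical all_reals all_analysis.
From mathcomp Require Import ring lra.
Import Order.TTheory GRing.Theory Num.Theory.
Import numFieldNormedType.Exports.
Local Open Scope classical_set_scope.
Local Open Scope ring_scope.
Set Implicit Arguments. Unset Strict Implicit. Unset Printing Implicit Defensive.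

Lemma is_derive_mono (R : realType) (H : normedModType R) (a : H) n (x : R) :
  is_derive x (1:R) (fun t : R => t ^+ n *: a) ((n%:R * x ^+ n.-1) *: a).
Proof.
have hk : is_derive x (1:R) (fun t : R => t ^+ n) (n%:R * x ^+ n.-1).
  have := is_deriveX n (is_derive_id x (1:R)).
  by rewrite exprfctE /= [X in is_derive _ _ _ X]/GRing.scale /= mulr1.
have dk : differentiable (fun t : R => t ^+ n) x.
  by apply/derivable1_diffP; exact: ex_derive.
apply: DeriveDef.
  by apply/derivable1_diffP; exact: differentiableZl.
rewrite deriveE; last exact: differentiableZl.
by rewrite diffZl // -deriveE // derive_val.
Qed.

Lemma poly_is_derive (R : realType) (H : normedModType R) n (a : nat -> H) (x : R) :
  is_derive x (1:R) (fun t => \sum_(k < n.+1) t ^+ k *: a k)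
    (\sum_(k < n.+1) (k%:R * x ^+ k.-1) *: a k).
Proof.
have := @is_derive_sum _ _ _ n.+1 (fun (k : 'I_n.+1) (t : R) => t ^+ k *: a k) x 1
  (fun k => (k%:R * x ^+ k.-1) *: a k) (fun k => @is_derive_mono R H (a k) k x).
by rewrite fct_sumE.
Qed.

Lemma Hpoly_cont (R : realType) (H : normedModType R) n (f : R -> H) :
  Hpoly n f -> continuous f.
Proof.
move=> [a ha].
have -> : f = (fun t => \sum_(k < n.+1) t ^+ k *: a k) by apply/funext.
move=> x; apply: differentiable_continuous; apply/derivable1_diffP.
have h := poly_is_derive n a x; exact: ex_derive.
Qed.

Lemma Hpoly_derivable (R : realType) (H : normedModType R) n (f : R -> H) x :
  Hpoly n f -> derivable f x 1.
Proof.
move=> [a ha].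
have -> : f = (fun t => \sum_(k < n.+1) t ^+ k *: a k) by apply/funext.
have h := poly_is_derive n a x; exact: ex_derive.
Qed.

Lemma Hpoly_derive (R : realType) (H : normedModType R) n (f : R -> H) :
  Hpoly n.+1 f -> Hpoly n (derive1 f).
Proof.
move=> [a ha].
have -> : f = (fun t => \sum_(k < n.+2) t ^+ k *: a k) by apply/funext.
exists (fun k => (k.+1)%:R *: a k.+1) => t.
have hd := poly_is_derive n.+1 a t.
rewrite derive1E derive_val big_ord_recl /= mul0r scale0r add0r.
by apply: eq_bigr => i _; rewrite /bump /= scalerA mulrC.
Qed.

Lemma ip_polar (R : realType) (H : normedModType R) (ip : H -> H -> R) :
  is_inner_product ip -> forall x y,
  ip x y = (`|x + y| ^+ 2 - `|x| ^+ 2 - `|y| ^+ 2) / 2.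
Proof.
move=> [hs hl hn] x y.
have ipD : forall u v w, ip (u + v) w = ip u w + ip v w.
  by move=> u v w; have := hl 1 u v w; rewrite scale1r mul1r.
rewrite -!hn (ipD x y (x + y)) (hs x (x + y)) (hs y (x + y)) (ipD x y x) (ipD x y y) (hs y x).
by field.
Qed.

Lemma eq_opp0 (R : realType) (x : R) : x = - x -> x = 0.
Proof. by move=> h; lra. Qed.

Lemma ip_cont (R : realType) (H : normedModType R) (ip : H -> H -> R)
  (T : topologicalType) (g h : T -> H) :
  is_inner_product ip -> continuous g -> continuous h ->
  continuous (fun t => ip (g t) (h t)).
Proof.
move=> hip cg ch.
pose n1 := fun t => `|g t + h t|.
pose n2 := fun t => `|g t|.
pose n3 := fun t => `|h t|.
have -> : (fun t => ip (g t) (h t)) =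
  ((n1 \* n1 - n2 \* n2 - n3 \* n3) \* cst 2^-1).
  by apply/funext => t; rewrite /= (ip_polar hip) !expr2.
move=> x.
have cn : forall k : T -> H, continuous k -> {for x, continuous (fun t => `|k t|)}.
  move=> k ck; apply: (continuous_comp (f := k) (g := Num.norm)); first exact: ck.
  exact: norm_continuous.
have cgh : continuous (g + h) by move=> z; apply: continuousD; [exact: cg|exact: ch].
apply: continuousM; last exact: cst_continuous.
apply: continuousB; first apply: continuousB.
- by apply: continuousM; exact: (cn (g + h)).
- by apply: continuousM; exact: cn.
- by apply: continuousM; exact: cn.
Qed.
Theorem theorem3p2 (R : realType) (H : completeNormedModType R)
  (ip : H -> H -> R) (hip : is_inner_product ip)
  (F : H -> R) (gradF : H -> H)
  (hFd : forall x, differentiable F x)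
  (hgrad : forall x v, 'd F x v = ip (gradF x) v)
  (hgc : continuous gradF)
  (M S : H -> H -> H)
  (hMlin : forall p, is_linear_op (M p)) (hSlin : forall p, is_linear_op (S p))
  (hMsym : forall p x y, ip (M p x) y = ip x (M p y))
  (hSskew : forall p x y, ip (S p x) y = - ip x (S p y))
  (tn tn1 : R) (htn : tn < tn1) (s : nat) (hs : (1 <= s)%N)
  (Phin : H) (Phih mu : R -> H)
  (hPhi : Hpoly s Phih) (hPhi0 : Phih tn = Phin) (hmu : Hpoly s.-1 mu)
  (heq1 : forall U : R -> H, Hpoly s.-1 U ->
     [/\ (@lebesgue_measure R).-integrable `[tn, tn1]
           (fun t => (ip (derive1 Phih t) (U t))%:E),
         (@lebesgue_measure R).-integrable `[tn, tn1]
           (fun t => (ip (M (Phih t) (mu t) + S (Phih t) (mu t)) (U t))%:E)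
       & Rintegral (@lebesgue_measure R) `[tn, tn1] (fun t => ip (derive1 Phih t) (U t))
         = Rintegral (@lebesgue_measure R) `[tn, tn1]
             (fun t => ip (M (Phih t) (mu t) + S (Phih t) (mu t)) (U t))])
  (heq2 : forall nu : R -> H, Hpoly s.-1 nu ->
     [/\ (@lebesgue_measure R).-integrable `[tn, tn1]
           (fun t => (ip (mu t) (nu t))%:E),
         (@lebesgue_measure R).-integrable `[tn, tn1]
           (fun t => (ip (gradF (Phih t)) (nu t))%:E)
       & Rintegral (@lebesgue_measure R) `[tn, tn1] (fun t => ip (mu t) (nu t))
         = Rintegral (@lebesgue_measure R) `[tn, tn1]
             (fun t => ip (gradF (Phih t)) (nu t))]) :
  F (Phih tn1) - F Phin =
  Rintegral (@lebesgue_measure R) `[tn, tn1] (fun t => ip (M (Phih t) (mu t)) (mu t)).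
Proof.
case: s hs hPhi hmu heq1 heq2 => // s' _ hPhi hmu heq1 heq2.
have hPd : Hpoly s' (derive1 Phih) by exact: Hpoly_derive.
have [_ _ e1] := heq1 mu hmu.
have [_ _ e2] := heq2 _ hPd.
have [hs hl hn] := hip.
have ipD : forall u v w, ip (u + v) w = ip u w + ip v w.
  by move=> u v w; have := hl 1 u v w; rewrite scale1r mul1r.
have dPhi : forall x, differentiable Phih x.
  by move=> x; apply/derivable1_diffP; exact: Hpoly_derivable hPhi.
have dG : forall x, differentiable (F \o Phih) x.
  by move=> x; apply: differentiable_comp.
have ftc : Rintegral (@lebesgue_measure R) `[tn, tn1]
    (fun t => ip (gradF (Phih t)) (derive1 Phih t)) = F (Phih tn1) - F (Phih tn).
  rewrite /Rintegral (@continuous_FTC2 R _ (F \o Phih)) //.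
  - apply: continuous_subspaceT; apply: ip_cont => //.
      by move=> x; apply: continuous_comp; [exact: differentiable_continuous (dPhi x)|exact: hgc].
    move=> y; apply: differentiable_continuous; apply/derivable1_diffP.
    exact: Hpoly_derivable hPd.
  - split.
    + by move=> x _; apply/derivable1_diffP.
    + by apply: cvg_at_right_filter; exact: differentiable_continuous.
    + by apply: cvg_at_left_filter; exact: differentiable_continuous.
  - move=> x _.
    rewrite derive1E deriveE // diff_comp //= hgrad derive1E deriveE //.
transitivity (Rintegral (@lebesgue_measure R) `[tn, tn1]
             (fun t => ip (M (Phih t) (mu t) + S (Phih t) (mu t)) (mu t))); last first.
  apply: eq_Rintegral => t _.
  rewrite ipD.
  have h0 := hSskew (Phih t) (mu t) (mu t); rewrite (hs (mu t) (S _ _)) in h0.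
  rewrite (eq_opp0 h0) addr0 //.
rewrite -e1 -hPhi0 -ftc -e2.
by apply: eq_Rintegral => t _; rewrite hs.
Qed.
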